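(* Let $G$ be a signed digraph with vertex set $V$ such that all cycles of $G$ have the same sign, and let $f$ be a Boolean network on $G$ with a unique fixed point. Then there is a permutation $\pi$ of $V$ (viewed as a word of length $|V|$) such that every word containing $\pi$ synchronizes $f$. In particular, $\pi$ synchronizes $f$.
   Context: A signed digraph on $V$ is $(V,E)$ with $E\subseteq V\times V\times\{-1,1\}$; cycles have no repeated vertices (a loop is a cycle) and their sign is the product of arc signs. A Boolean network (BN) is $f:\{0,1\}^V\to\{0,1\}^V$; its signed interaction digraph has a positive (negative) arc from $j$ to $i$ iff for some $x$ with $x_j=0$, $f_i(x+e_j)-f_i(x)$ is positive (negative). A BN on $G$ is one whose signed interaction digraph is $G$. A word $u$ contains a word $v$ if $v$ can be obtained by deleting some letters of $u$. $f^i(x)$ is $x$ with $x_i$ replaced by $f_i(x)$; $f^{i_1\cdots i_\ell}=f^{i_\ell}\circ\cdots\circ f^{i_1}$; $w$ synchronizes $f$ if $f^w$ is constant. *)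

(* Defs.v *)
From mathcomp Require Import all_boot.
Set Implicit Arguments. Unset Strict Implicit. Unset Printing Implicit Defensive.

(* Signs are booleans: true = positive (+1), false = negative (-1). *)
(* A signed digraph on V: a set of arcs (j, i, s), an arc from j to i of sign s. *)
Definition sdigraph (V : finType) := {set (V * V) * bool}.

Definition config (V : finType) := {ffun V -> bool}.
Definition BN (V : finType) := config V -> config V.

Definition upd (V : finType) (x : config V) (j : V) (b : bool) : config V :=
  [ffun k => if k == j then b else x k].

(* Signed interaction digraph of f: arc (j,i,+) iff exists x, x_j = 0,
   f_i(x + e_j) - f_i(x) > 0, i.e. f_i(x) = 0 and f_i(x+e_j) = 1;
   arc (j,i,-) iff f_i(x) = 1 and f_i(x+e_j) = 0. *)
Definition interaction_graph (V : finType) (f : BN V) : sdigraph V :=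
  [set a : (V * V) * bool |
    [exists x : config V,
      [&& x a.1.1 == false,
          f x a.1.2 == ~~ a.2 &
          f (upd x a.1.1 true) a.1.2 == a.2]]].

(* A cycle is given by the list c = [:: (u_0,s_0); ...; (u_{k-1},s_{k-1})],
   k >= 1, with u_0..u_{k-1} pairwise distinct and arcs (u_t, u_{t+1 mod k}, s_t)
   in G.  A loop is the case k = 1. *)
Definition is_cycle (V : finType) (G : sdigraph V) (c : seq (V * bool)) : bool :=
  [&& c != [::], uniq (map fst c) &
      all (fun p : (V * bool) * (V * bool) => ((p.1.1, p.2.1), p.1.2) \in G)
          (zip c (rot 1 c))].

(* Sign of a cycle = product of arc signs: positive iff even number of negative arcs. *)
Definition cycle_sign (V : finType) (c : seq (V * bool)) : bool :=
  ~~ odd (count (fun p : V * bool => ~~ p.2) c).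

Definition async (V : finType) (f : BN V) (i : V) (x : config V) : config V :=
  upd x i (f x i).

(* f^{i_1 ... i_l} = f^{i_l} o ... o f^{i_1} *)
Definition async_word (V : finType) (f : BN V) (w : seq V) (x : config V) : config V :=
  foldl (fun y i => async f i y) x w.

Definition synchronizes (V : finType) (f : BN V) (w : seq V) : Prop :=
  exists y : config V, forall x : config V, async_word f w x = y.

Definition contains (V : finType) (u v : seq V) : bool := subseq v u.

(* Main.v *)
Require Import Defs.
From Stdlib Require Import Classical.
From mathcomp Require Import all_boot zify.
Set Implicit Arguments. Unset Strict Implicit. Unset Printing Implicit Defensive.

Lemma updE (V : finType) (x : config V) j b k : upd x j b k = if k == j then b else x k.
Proof. by rewrite /upd ffunE. Qed.

Lemma walk (V : finType) (f : BN V) (i : V) : forall n (y z : config V),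
  #|[set k | y k != z k]| <= n -> f y i != f z i ->
  exists j (w : config V), [/\ y j != z j, (forall k, w k = y k \/ w k = z k), w j = false,
     f w i = ~~ (y j == f y i) & f (upd w j true) i = (y j == f y i)].
Proof.
elim=> [|n IH] y z Hc Hne.
- have [j Hj]: exists j, y j != z j.
    case: (pickP (fun k => y k != z k)) => [j Hj | H]; first by exists j.
    have yz: y = z by apply/ffunP => k; move: (H k) => /negbFE/eqP.
    by move: Hne; rewrite yz eqxx.
  have : 0 < #|[set k | y k != z k]| by apply/card_gt0P; exists j; rewrite inE.
  by rewrite leqn0 in Hc; rewrite (eqP Hc).
- have [j Hj]: exists j, y j != z j.
    case: (pickP (fun k => y k != z k)) => [j Hj | H]; first by exists j.
    have yz: y = z by apply/ffunP => k; move: (H k) => /negbFE/eqP.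
    by move: Hne; rewrite yz eqxx.
  set y1 := upd y j (z j).
  have Hc1 : #|[set k | y1 k != z k]| <= n.
    have : [set k | y1 k != z k] \proper [set k | y k != z k].
      apply/properP; split.
        apply/subsetP => k; rewrite !inE /y1 updE; case: (k =P j) => [->|//].
        by rewrite eqxx.
      by exists j; rewrite !inE ?Hj // /y1 updE eqxx eqxx.
    move/proper_card => H; rewrite -ltnS; exact: leq_trans H Hc.
  case: (boolP (f y1 i == f y i)) => [/eqP E | NE].
  + have H0 : f y1 i != f z i by rewrite E.
    have [j' [w [H1 H2 H3 H4 H5]]] := IH y1 z Hc1 H0.
    have jj : j' != j by apply/eqP => jj; move: H1; rewrite jj /y1 updE eqxx eqxx.
    have yj : y1 j' = y j' by rewrite /y1 updE (negbTE jj).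
    exists j', w; split.
    * by rewrite -yj.
    * move=> k; case: (H2 k) => [->|]; last by right.
      rewrite /y1 updE; case: (k =P j) => [->|_]; [by right | by left].
    * by [].
    * by rewrite H4 yj E.
    * by rewrite H5 yj E.
  + case Eyj: (y j).
    * have zj : z j = false by move: Hj; rewrite Eyj; case: (z j).
      exists j, y1; split.
      -- by rewrite Eyj zj.
      -- move=> k; rewrite /y1 updE; case: (k =P j) => [->|_]; [by right | by left].
      -- by rewrite /y1 updE eqxx.
      -- by rewrite Eyj; move: NE; case: (f y1 i); case: (f y i).
      -- have -> : upd y1 j true = y.
           by apply/ffunP => k; rewrite /y1 !updE; case: (k =P j) => // ->.
         by rewrite Eyj; case: (f y i).
    * have zj : z j = true by move: Hj; rewrite Eyj; case: (z j).
      exists j, y; split.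
      -- by rewrite Eyj zj.
      -- by move=> k; left.
      -- by [].
      -- by rewrite Eyj; case: (f y i).
      -- have -> : upd y j true = y1 by rewrite /y1 zj.
         by rewrite Eyj; move: NE; case: (f y1 i); case: (f y i).
Qed.
Definition srel (V : finType) (G : sdigraph V) : rel (V * bool) :=
  fun x y => ((x.1, y.1), x.2 == y.2) \in G.

Fixpoint cw (V : finType) (x0 : V * bool) (p : seq (V * bool)) : seq (V * bool) :=
  match p with [::] => [::] | y :: p' => (x0.1, x0.2 == y.2) :: cw y p' end.

Lemma cw_fst (V : finType) (p : seq (V * bool)) x0 :
  map fst (cw x0 p) = map fst (belast x0 p).
Proof. by elim: p x0 => [|y p IH] x0 //=; rewrite IH. Qed.

Lemma cw_count (V : finType) (p : seq (V * bool)) x0 :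
  odd (count (fun q => ~~ q.2) (cw x0 p)) = (x0.2 != (last x0 p).2).
Proof.
elim: p x0 => [|y p IH] x0 /=; first by case: (x0.2).
rewrite oddD IH; case: (x0.2); case: (y.2); by case: ((last y p).2).
Qed.

Lemma cw_zip (V : finType) (G : sdigraph V) (p : seq (V * bool)) x0 z :
  path (srel G) x0 p -> p != [::] -> z.1 = (last x0 p).1 ->
  all (fun q : (V * bool) * (V * bool) => ((q.1.1, q.2.1), q.1.2) \in G)
      (zip (cw x0 p) (rcons (behead (cw x0 p)) z)).
Proof.
elim: p x0 => [|y p IH] x0 //= /andP[Hxy Hp] _ Hz.
case: p IH Hp Hz => [|y' p'] IH Hp Hz /=.
- by rewrite andbT Hz; move: Hxy; rewrite /srel.
- by apply/andP; split; [exact: Hxy | exact: (IH y Hp isT Hz)].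
Qed.

Lemma base (V : finType) (G : sdigraph V) (x0 : V * bool) (p : seq (V * bool)) :
  path (srel G) x0 p -> p != [::] -> (last x0 p).1 = x0.1 ->
  uniq (map fst (belast x0 p)) ->
  exists c, is_cycle G c /\ cycle_sign c = (x0.2 == (last x0 p).2).
Proof.
move=> Hp Hne Hl Hu; exists (cw x0 p); split.
- rewrite /is_cycle cw_fst Hu /=.
  case: p Hp Hne Hl Hu => [|y p] // Hp _ Hl Hu.
  have := cw_zip (z := (x0.1, x0.2 == y.2)) Hp isT.
  rewrite Hl => /(_ erefl) H.
  by rewrite [cw _ _]/= rot1_cons.
- rewrite /cycle_sign cw_count; by case: (x0.2); case: ((last x0 p).2).
Qed.
Lemma dup_split (T U : eqType) (l : seq (T * U)) : ~~ uniq (map fst l) ->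
  exists l1 a l2 b l3, l = l1 ++ a :: l2 ++ b :: l3 /\ a.1 = b.1.
Proof.
elim: l => [|x l IH] //=; rewrite negb_and negbK => /orP[Hin|Hnu].
- case/mapP: Hin => y Hy Exy; case/splitPr: Hy => l2 l3.
  by exists [::], x, l2, y, l3.
- have [l1 [a [l2 [b [l3 [E Eab]]]]]] := IH Hnu.
  by exists (x :: l1), a, l2, b, l3; rewrite E.
Qed.

Lemma sorted_catR (T : eqType) (e : rel T) s1 s2 : sorted e (s1 ++ s2) -> sorted e s2.
Proof. by elim: s1 => [|x s1 IH] //= H; apply: IH; exact: path_sorted H. Qed.

Lemma cw_odd (V : finType) (G : sdigraph V) : forall n (x0 : V * bool) p, size p <= n ->
  path (srel G) x0 p -> last x0 p = (x0.1, ~~ x0.2) ->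
  exists c, is_cycle G c /\ cycle_sign c = false.
Proof.
elim=> [|n IH] x0 p Hs Hp Hl.
- case: p Hs Hp Hl => [|? ?] //= _ _; case: x0 => a b [] /eqP; by case: b.
- move: Hl; case: (shortenP Hp) => p' Hp' Hu Hsub Hl.
  have Hsz : size p' <= size p.
    by apply: uniq_leq_size => //; move: Hu => /andP[].
  have Hne : p' != [::].
    by apply/eqP => E; move: Hl; rewrite E /= => /(congr1 snd) /=; case: (x0.2).
  case: (boolP (uniq (map fst (belast x0 p')))) => Hbu.
  + have Hl1 : (last x0 p').1 = x0.1 by rewrite Hl.
    have [c [Hc Hsg]] := base Hp' Hne Hl1 Hbu.
    by exists c; rewrite Hsg Hl /=; case: (x0.2).
  + have [l1 [a [l2 [b [l3 [E Eab]]]]]] := dup_split Hbu.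
    have Hfull : x0 :: p' = l1 ++ a :: l2 ++ b :: rcons l3 (last x0 p').
      by rewrite lastI E rcons_cat /= rcons_cat.
    have Hab : a != b.
      move: Hu; rewrite Hfull cat_uniq => /and3P[_ _].
      rewrite /= mem_cat inE !negb_or => /andP[/andP[_ /andP[]]] //.
    have Hs2 : sorted (srel G) (a :: l2 ++ b :: rcons l3 (last x0 p')).
      by apply: (@sorted_catR _ _ l1); rewrite -Hfull.
    have Hp2 : path (srel G) a (rcons l2 b).
      move: Hs2; rewrite /= cat_path rcons_path => /andP[-> /=] /andP[-> _] //.
    have Hb : b = (a.1, ~~ a.2).
      move: Hab Eab; clear; case: a => a1 a2; case: b => b1 b2 /= Hab Eab; subst b1.
      by move: Hab; case: a2; case: b2; rewrite ?eqxx.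
    have Hsz2 : size (rcons l2 b) <= n.
      have := size_belast x0 p'; rewrite E size_cat /= size_cat /=.
      move=> H; rewrite size_rcons; have := leq_trans Hsz Hs; rewrite -H; lia.
    by apply: (IH a (rcons l2 b) Hsz2 Hp2); rewrite last_rcons.
Qed.

Definition inQ (V : finType) (S : {set V}) (a y : config V) : bool :=
  [forall k, (k \in S) ==> (y k == a k)].

Lemma inQP (V : finType) (S : {set V}) (a y : config V) :
  reflect (forall k, k \in S -> y k = a k) (inQ S a y).
Proof.
apply: (iffP forallP) => H k.
- by move=> Hk; apply/eqP; exact: (implyP (H k)).
- by apply/implyP => /H ->.
Qed.

Definition qarc (V : finType) (f : BN V) (S : {set V}) (a : config V) (j i : V) (s : bool) : bool :=
  [&& j \notin S, i \notin S & [exists w : config V,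
     [&& inQ S a w, w j == false, f w i == ~~ s & f (upd w j true) i == s]]].

Definition qrel (V : finType) (f : BN V) (S : {set V}) (a : config V) : rel V :=
  fun j i => qarc f S a j i true || qarc f S a j i false.

Definition srelQ (V : finType) (f : BN V) (S : {set V}) (a : config V) : rel (V * bool) :=
  fun x y => qarc f S a x.1 y.1 (x.2 == y.2).

Lemma qarc_G (V : finType) (f : BN V) S a j i s :
  qarc f S a j i s -> ((j, i), s) \in interaction_graph f.
Proof.
case/and3P => _ _ /existsP [w /and4P [_ H1 H2 H3]].
by rewrite inE; apply/existsP; exists w; rewrite /= H1 H2 H3.
Qed.

Lemma qarc_walk (V : finType) (f : BN V) S a (y z : config V) i :
  inQ S a y -> inQ S a z -> i \notin S -> f y i != f z i ->
  exists j, qarc f S a j i (y j == f y i).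
Proof.
move=> /inQP Hy /inQP Hz Hi Hne.
have [j [w [H1 H2 H3 H4 H5]]] := walk (leqnn _) Hne.
have Hj : j \notin S by apply/negP => HjS; move: H1; rewrite (Hy j HjS) (Hz j HjS) eqxx.
exists j; rewrite /qarc Hj Hi /=; apply/existsP; exists w.
rewrite H3 H4 H5 !eqxx !andbT /=; apply/inQP => k Hk.
by case: (H2 k) => ->; [apply: Hy | apply: Hz].
Qed.

Lemma conn_notin (V : finType) (f : BN V) S a j i :
  connect (qrel f S a) j i -> i \notin S -> j \notin S.
Proof.
case/connectP => [[|k p]] /= Hp -> // _.
by case/andP: Hp => /orP[] /and3P[].
Qed.

Lemma lift_conn (V : finType) (f : BN V) S a u v :
  connect (qrel f S a) u v -> forall b, exists b', connect (srelQ f S a) (u, b) (v, b').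
Proof.
case/connectP => p Hp ->; elim: p u Hp => [|w p IH] u /= Hp b.
  by exists b; exact: connect0.
case/andP: Hp => H1 H2.
have [s Hs] : exists s, qarc f S a u w s by case/orP: H1 => H; [exists true | exists false].
have [b' Hb'] := IH w H2 (b == s).
exists b'; apply: connect_trans Hb'; apply: connect1.
by rewrite /srelQ /=; have -> : (b == (b == s)) = s by clear; case: b; case: s.
Qed.

Definition flipb (V : finType) (x : V * bool) := (x.1, ~~ x.2).

Lemma flip_conn (V : finType) (f : BN V) S a x y :
  connect (srelQ f S a) x y -> connect (srelQ f S a) (flipb x) (flipb y).
Proof.
case/connectP => p Hp ->; apply/connectP; exists (map (@flipb V) p); last by rewrite last_map.
elim: p x Hp => [|z p IH] x //= /andP[H1 H2]; rewrite IH // andbT.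
by move: H1; rewrite /srelQ /=; case: (x.2); case: (z.2).
Qed.

Lemma no_odd (V : finType) (f : BN V) S a v b :
  (forall c, is_cycle (interaction_graph f) c -> cycle_sign c = true) ->
  ~ connect (srelQ f S a) (v, b) (v, ~~ b).
Proof.
move=> Hpos /connectP [p Hp Hl].
have Hp' : path (srel (interaction_graph f)) (v, b) p.
  by apply: sub_path Hp => x y; exact: qarc_G.
have [c [Hc Hs]] := cw_odd (leqnn (size p)) Hp' (esym Hl).
by move: (Hpos c Hc); rewrite Hs.
Qed.

Lemma key (V : finType) (f : BN V) (S : {set V}) (a : config V) :
  (forall c, is_cycle (interaction_graph f) c -> cycle_sign c = true) ->
  forall i1, i1 \notin S ->
  (forall i, i \notin S -> exists z, inQ S a z /\ f z i != f a i) ->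
  exists (C : {set V}) (sg : V -> bool),
    [/\ exists2 c, c \in C & c \notin S,
        (forall k, k \in C -> k \notin S) &
        forall t : bool, forall y, inQ S a y -> (forall k, k \in C -> y k = (t == sg k)) ->
          forall i, i \in C -> f y i = (t == sg i)].
Proof.
move=> Hpos i1 Hi1 Hnc.
pose e := qrel f S a.
pose anc i := [set j | connect e j i].
case: (@arg_minnP V i1 (fun i => i \notin S) (fun i => #|anc i|) Hi1) => i0 Hi0 Hmin.
have SC : forall i, i \notin S -> connect e i i0 -> connect e i0 i.
  move=> i Hi Hc.
  have Hsub : anc i \subset anc i0.
    by apply/subsetP => j; rewrite !inE => Hj; apply: connect_trans Hj Hc.
  have : anc i == anc i0 by rewrite eqEcard Hsub Hmin.
  move/eqP => E; have : i0 \in anc i by rewrite E inE connect0.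
  by rewrite inE.
pose C := anc i0.
pose sg i := connect (srelQ f S a) (i0, false) (i, true).
have CnS : forall k, k \in C -> k \notin S.
  by move=> k; rewrite inE => Hk; apply: conn_notin Hk Hi0.
have Cpred : forall j i, e j i -> i \in C -> j \in C.
  move=> j i Hji; rewrite !inE => Hi; apply: connect_trans Hi; exact: connect1.
have R : forall i, i \in C -> connect (srelQ f S a) (i0, false) (i, sg i).
  move=> i HiC; have HiC' : connect e i i0 by move: HiC; rewrite inE.
  have [b' Hb'] := lift_conn (SC i (CnS i HiC) HiC') false.
  rewrite /sg; case E: (connect _ (i0, false) (i, true)) => //.
  by case: b' Hb' => // H; rewrite H in E.
have U : forall i b b', i \in C -> connect (srelQ f S a) (i0, false) (i, b) ->
    connect (srelQ f S a) (i0, false) (i, b') -> b = b'.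
  move=> i b b' HiC Hb Hb'.
  have HiC' : connect e i i0 by move: HiC; rewrite inE.
  have [b2 Hb2] := lift_conn HiC' b.
  have Hb2' := flip_conn Hb2; rewrite /flipb /= in Hb2'.
  case: (boolP (b == b')) => [/eqP //|Hne].
  have Eb' : b' = ~~ b by move: Hne; clear; case: b; case: b'.
  rewrite Eb' in Hb'.
  have C1 := connect_trans Hb Hb2.
  have C2 := connect_trans Hb' Hb2'.
  move: C1 C2; clear -Hpos; case: b2 => [C1 _ | _ C2].
  + by case: (no_odd (b := false) Hpos C1).
  + by case: (no_odd (b := false) Hpos C2).
have Bal : forall j i s, qarc f S a j i s -> i \in C -> s = (sg j == sg i).
  move=> j i s Hq HiC.
  have HjC : j \in C by apply: (Cpred j i) => //; rewrite /e /qrel; case: s Hq => ->; rewrite ?orbT.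
  have Hstep : srelQ f S a (j, sg j) (i, sg j == s).
    by rewrite /srelQ /=; have -> : (sg j == (sg j == s)) = s by clear; case: (sg j); case: s.
  have := U i _ _ HiC (connect_trans (R j HjC) (connect1 Hstep)) (R i HiC).
  by clear; case: (sg j); case: s; case: (sg i).
exists C, sg; split.
- by exists i0 => //; rewrite inE connect0.
- exact: CnS.
- move=> t y Hy HyC i HiC.
  case: (boolP (f y i == (t == sg i))) => [/eqP //|Hne].
  have [z [Hz Hzi]] : exists z, inQ S a z /\ f y i != f z i.
    have [z [Hz Hza]] := Hnc i (CnS i HiC).
    case: (boolP (f y i == f a i)) => [/eqP E|Ha].
    + by exists z; rewrite E eq_sym.
    + by exists a; split => //; apply/inQP.
  have [j Hq] := qarc_walk Hy Hz (CnS i HiC) Hzi.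
  have HjC : j \in C.
    apply: (Cpred j i) => //; rewrite /e /qrel.
    by case: (y j == f y i) Hq => ->; rewrite ?orbT.
  have := Bal _ _ _ Hq HiC; rewrite (HyC j HjC).
  by move: Hne; clear; case: (f y i); case: t; case: (sg i); case: (sg j).
Qed.

Lemma card_lt (V : finType) (S S' : {set V}) c :
  S \subset S' -> c \notin S -> c \in S' -> #|~: S'| < #|~: S|.
Proof.
move=> Hs Hc Hc'; apply: proper_card; apply/properP; split.
- by rewrite setCS.
- by exists c; rewrite !inE ?Hc ?Hc'.
Qed.

Lemma ex_fix (V : finType) (f : BN V) :
  (forall c, is_cycle (interaction_graph f) c -> cycle_sign c = true) ->
  forall n (S : {set V}) (a : config V), #|~: S| <= n ->
  exists y, inQ S a y /\ forall i, i \notin S -> f y i = y i.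
Proof.
move=> Hpos; elim=> [|n IH] S a Hn.
- exists a; split; first by apply/inQP.
  move=> i Hi; have : 0 < #|~: S| by apply/card_gt0P; exists i; rewrite inE.
  by rewrite leqn0 in Hn; rewrite (eqP Hn).
- case: (pickP (fun i => i \notin S)) => [i1 Hi1 | Hall]; last first.
    by exists a; split; [apply/inQP | move=> i; rewrite Hall].
  case: (classic (exists v, v \notin S /\ forall z, inQ S a z -> f z v = f a v)).
  + move=> [v [Hv Hconst]].
    have Hn' : #|~: (v |: S)| <= n.
      by rewrite -ltnS; apply: leq_trans Hn; apply: (card_lt (c := v)); rewrite ?subsetUr ?setU11.
    have [y [Hy Hfix]] := IH (v |: S) (upd a v (f a v)) Hn'.
    have HyQ : inQ S a y.
      apply/inQP => k Hk; rewrite (inQP _ _ _ Hy k) ?inE ?Hk ?orbT // updE.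
      by case: (k =P v) => // E; move: Hv; rewrite -E Hk.
    exists y; split => // i Hi.
    case: (i =P v) => [->|Hiv].
    * by rewrite (Hconst y HyQ) (inQP _ _ _ Hy v) ?setU11 // updE eqxx.
    * by apply: Hfix; rewrite !inE negb_or Hi andbT; apply/eqP.
  + move=> Hnot.
    have Hnc : forall i, i \notin S -> exists z, inQ S a z /\ f z i != f a i.
      move=> i Hi; apply: NNPP => H; apply: Hnot; exists i; split => // z Hz.
      apply: NNPP => H2; apply: H; exists z; split => //; exact/eqP.
    have [C [sg [[c HcC HcS] CnS HProp]]] := key Hpos Hi1 Hnc.
    pose a' := [ffun k => if k \in C then (true == sg k) else a k].
    have Hn' : #|~: (S :|: C)| <= n.
      have HcS' : c \in S :|: C by rewrite inE HcC orbT.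
      have Hlt := @card_lt V S (S :|: C) c (subsetUl _ _) HcS HcS'; lia.
    have [y [Hy Hfix]] := IH (S :|: C) a' Hn'.
    have HyQ : inQ S a y.
      apply/inQP => k Hk; rewrite (inQP _ _ _ Hy k) ?inE ?Hk // /a' ffunE.
      by case: ifP => // /CnS; rewrite Hk.
    have HyC : forall k, k \in C -> y k = (true == sg k).
      by move=> k Hk; rewrite (inQP _ _ _ Hy k) ?inE ?Hk ?orbT // /a' ffunE Hk.
    exists y; split => // i Hi.
    case: (boolP (i \in C)) => HiC.
    * by rewrite (HProp true y HyQ HyC i HiC) HyC.
    * by apply: Hfix; rewrite inE negb_or Hi.
Qed.

Definition trap (V : finType) (f : BN V) (x : config V) (S : {set V}) :=
  forall y, inQ S x y -> forall i, i \in S -> f y i = x i.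
Definition det (V : finType) (f : BN V) (x : config V) (S : {set V}) (v : V) :=
  forall y, inQ S x y -> f y v = x v.

Lemma lemL (V : finType) (f : BN V) (x : config V) :
  (exists s : bool, forall c, is_cycle (interaction_graph f) c -> cycle_sign c = s) ->
  f x = x -> (forall y, f y = y -> x = y) ->
  forall S, trap f x S -> forall i1, i1 \notin S -> exists v, v \notin S /\ det f x S v.
Proof.
move=> [s Hs] Hfix Huniq S Ht i1 Hi1.
apply: NNPP => Hno.
have Hnd : forall v, v \notin S -> exists z, inQ S x z /\ f z v != x v.
  move=> v Hv; apply: NNPP => H; apply: Hno; exists v; split => // z Hz.
  apply: NNPP => H2; apply: H; exists z; split => //; exact/eqP.
case: s Hs => Hs.
-
  have Hnc : forall i, i \notin S -> exists z, inQ S x z /\ f z i != f x i.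
    by move=> i Hi; rewrite Hfix; exact: Hnd.
  have [C [sg [[c HcC HcS] CnS HProp]]] := key Hs Hi1 Hnc.
  have Hmk : forall t : bool, x c = (t == sg c).
    move=> t.
    pose a' := [ffun k => if k \in C then (t == sg k) else x k].
    have [y [Hy Hfx]] := @ex_fix V f Hs _ (S :|: C) a' (leqnn _).
    have HyQ : inQ S x y.
      apply/inQP => k Hk; rewrite (inQP _ _ _ Hy k) ?inE ?Hk // /a' ffunE.
      by case: ifP => // /CnS; rewrite Hk.
    have HyC : forall k, k \in C -> y k = (t == sg k).
      by move=> k Hk; rewrite (inQP _ _ _ Hy k) ?inE ?Hk ?orbT // /a' ffunE Hk.
    have Hyf : f y = y.
      apply/ffunP => i; case: (boolP (i \in S)) => Hi.
      + by rewrite (Ht y HyQ i Hi) (inQP _ _ _ HyQ i Hi).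
      + case: (boolP (i \in C)) => HiC.
        * by rewrite (HProp t y HyQ HyC i HiC) HyC.
        * by apply: Hfx; rewrite inE negb_or Hi.
    by rewrite (Huniq y Hyf) HyC.
  by have := Hmk true; rewrite (Hmk false); case: (sg c).
-
  pose e : rel V := fun j i => [&& j \notin S, i \notin S & ((j, i), x j == x i) \in interaction_graph f].
  have Hpred : forall i, i \notin S -> exists j, e j i.
    move=> i Hi; have [z [Hz Hzi]] := Hnd i Hi.
    have HxQ : inQ S x x by apply/inQP.
    have Hne : f x i != f z i by rewrite Hfix eq_sym.
    have [j Hq] := qarc_walk HxQ Hz Hi Hne.
    exists j; move: (qarc_G Hq); rewrite Hfix => HG.
    by case/and3P: Hq => Hj _ _; rewrite /e Hj Hi HG.
  pose anc i := [set j | connect e j i].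
  case: (@arg_minnP V i1 (fun i => i \notin S) (fun i => #|anc i|) Hi1) => i0 Hi0 Hmin.
  have [j Hj] := Hpred i0 Hi0.
  have HjS : j \notin S by case/and3P: Hj.
  have Hc : connect e i0 j.
    have Hsub : anc j \subset anc i0.
      apply/subsetP => k; rewrite !inE => Hk; apply: connect_trans Hk _; exact: connect1.
    have : anc j == anc i0 by rewrite eqEcard Hsub Hmin.
    move/eqP => E; have : i0 \in anc j by rewrite E inE connect0.
    by rewrite inE.
  case/connectP: Hc => q Hq Hlq.
  move: Hlq; case: (shortenP Hq) => q' Hq' Hu _ Hlq.
  pose h (v : V) := (v, x v).
  have Hcl : path e i0 (rcons q' i0) by rewrite rcons_path Hq' -Hlq Hj.
  have Hp : path (srel (interaction_graph f)) (h i0) (map h (rcons q' i0)).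
    rewrite path_map; apply: sub_path Hcl => u w /and3P [_ _ H]; exact: H.
  have Hne : map h (rcons q' i0) != [::] by case: (q').
  have Hl : (last (h i0) (map h (rcons q' i0))).1 = (h i0).1 by rewrite last_map last_rcons.
  have Hbu : uniq (map fst (belast (h i0) (map h (rcons q' i0)))).
    rewrite belast_map belast_rcons -map_comp.
    by rewrite (@eq_map _ _ (fst \o h) id) ?map_id.
  have [c [Hc Hsg]] := base Hp Hne Hl Hbu.
  by move: (Hs c Hc); rewrite Hsg last_map last_rcons /= eqxx.
Qed.

Fixpoint goodc (V : finType) (f : BN V) (x : config V) (S : {set V}) (l : seq V) : Prop :=
  match l with
  | [::] => True
  | v :: l' => det f x S v /\ goodc f x (v |: S) l'
  end.

Lemma trap_step (V : finType) (f : BN V) (x : config V) S v :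
  trap f x S -> det f x S v -> trap f x (v |: S).
Proof.
move=> Ht Hd y Hy i.
have HyS : inQ S x y.
  apply/inQP => k0 Hk0; apply: (inQP _ _ _ Hy); by rewrite !inE Hk0 orbT.
rewrite !inE => /orP [/eqP ->|Hi].
- exact: Hd y HyS.
- exact: Ht y HyS i Hi.
Qed.

Lemma chain (V : finType) (f : BN V) (x : config V) :
  (exists s : bool, forall c, is_cycle (interaction_graph f) c -> cycle_sign c = s) ->
  f x = x -> (forall y, f y = y -> x = y) ->
  forall n S, #|~: S| <= n -> trap f x S ->
  exists l, [/\ uniq l, (forall v, (v \in l) = (v \notin S)) & goodc f x S l].
Proof.
move=> Hs Hfix Huniq; elim=> [|n IH] S Hn Ht.
- exists [::]; split => // v; rewrite in_nil; apply/esym/negbTE.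
  apply/negP => Hv; have : 0 < #|~: S| by apply/card_gt0P; exists v; rewrite inE.
  by rewrite leqn0 in Hn; rewrite (eqP Hn).
- case: (pickP (fun i => i \notin S)) => [i1 Hi1 | Hall]; last first.
    by exists [::]; split => // v; rewrite in_nil Hall.
  have [v [Hv Hd]] := lemL Hs Hfix Huniq Ht Hi1.
  have Hn' : #|~: (v |: S)| <= n.
    have Hlt := @card_lt V S (v |: S) v (subsetUr _ _) Hv (setU11 _ _); lia.
  have [l [Hu Hm Hg]] := IH (v |: S) Hn' (trap_step Ht Hd).
  exists (v :: l); split => //=.
  + by rewrite Hu andbT Hm setU11.
  + move=> k; rewrite inE Hm !inE negb_or; case: (k =P v) => [->|] //=.
Qed.

Lemma async_inQ (V : finType) (f : BN V) (x : config V) S a y :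
  trap f x S -> inQ S x y -> inQ S x (async f a y).
Proof.
move=> Ht Hy; apply/inQP => k Hk; rewrite /async updE.
case: (k =P a) => [E|_]; last exact: (inQP _ _ _ Hy).
by rewrite E in Hk *; apply: Ht.
Qed.

Lemma sync (V : finType) (f : BN V) (x : config V) : forall w S l y,
  trap f x S -> goodc f x S l -> (forall k, k \notin S -> k \in l) -> inQ S x y ->
  subseq l w -> async_word f w y = x.
Proof.
elim=> [|a w IH] S l y Ht Hg Hl Hy Hsub.
- move: Hsub; rewrite subseq0 => /eqP El; subst l.
  apply/ffunP => k; case: (boolP (k \in S)) => Hk; first exact: (inQP _ _ _ Hy).
  by move: (Hl k Hk).
- rewrite /async_word /= -/(async_word f w (async f a y)).
  have HyS := async_inQ a Ht Hy.
  case: l Hg Hl Hsub => [|v l'] Hg Hl Hsub.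
  + by apply: (IH S [::]) => //; rewrite sub0seq.
  + move: Hsub => /=; case: (v =P a) => [Eva|Nva] Hsub.
    * subst a; case: Hg => Hd Hg.
      apply: (IH (v |: S) l') => //.
      -- exact: trap_step.
      -- move=> k; rewrite !inE negb_or => /andP [Hkv HkS].
         by move: (Hl k HkS); rewrite inE (negbTE Hkv).
      -- apply/inQP => k; rewrite !inE => /orP [/eqP ->|Hk].
         ++ by rewrite /async updE eqxx; apply: Hd.
         ++ exact: (inQP _ _ _ HyS).
    * exact: (IH S (v :: l')).
Qed.

Unset Implicit Arguments.

Theorem proposition7 (V : finType) (G : sdigraph V) (f : BN V) :
  (exists s : bool, forall c : seq (V * bool), is_cycle G c -> cycle_sign c = s) ->
  interaction_graph f = G ->
  (exists! x : config V, f x = x) ->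
  exists pi : seq V,
    perm_eq pi (enum V) /\
    (forall w : seq V, contains w pi -> synchronizes f w) /\
    synchronizes f pi.
Proof.
move=> Hs HG [x [Hfix Huniq]]; subst G.
have Ht0 : trap f x set0 by move=> y _ i; rewrite inE.
have [l [Hu Hm Hg]] := chain Hs Hfix Huniq (leqnn _) Ht0.
have Hsy : forall w : seq V, contains w l -> synchronizes f w.
  move=> w Hw; exists x => y; apply: (sync (S := set0) (l := l)) => //.
  - by move=> k _; rewrite Hm inE.
  - by apply/inQP => k; rewrite inE.
exists l; split.
- by apply: uniq_perm => // [|k]; [exact: enum_uniq | rewrite mem_enum Hm inE].
- split => //; apply: Hsy; exact: subseq_refl.
Qed.
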